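(* Suppose $F\in\mathcal N$ is $n$ times renormalizable, and for $k=0,1,\dots,n$ let $F_k=R^kF$ and $\boldsymbol\delta_k=\pi_{\mathbf z}\circ F_k$. Then for $k=1,\dots,n$: $X_k(w)=X_{k-1}\circ\psi^k_c(w)-\mathbf q_{k-1}(\sigma_{k-1}x)$, $Y_k(w)=Z_{k-1}\circ\psi^k_c(w)\cdot\big[Y_{k-1}\circ\psi^k_v(w)+Z_{k-1}\circ\psi^k_v(w)\cdot\mathbf q_{k-1}(\sigma_{k-1}y)\big]$, $Z_k(w)=Z_{k-1}\circ\psi^k_c(w)\cdot Z_{k-1}\circ\psi^k_v(w)$.
   Context: Fix an integer $m\ge 1$ and a hypercube $B\subset\mathbb R^{m+2}$; points are $w=(x,y,\mathbf z)$, $\mathbf z=(z_1,\dots,z_m)$. An $(m+2)$-dimensional Hénon-like map is an analytic orientation-preserving map $F(x,y,\mathbf z)=(f(x)-\varepsilon(x,y,\mathbf z),\,x,\,\boldsymbol\delta(x,y,\mathbf z))$ on $B$ with $f$ unimodal, $\boldsymbol\delta=(\delta^1,\dots,\delta^m)$, $\|\varepsilon\|,\|\boldsymbol\delta\|\le C\bar\varepsilon$ for small $\bar\varepsilon>0$. Its renormalization is $RF=\Lambda\circ H\circ F^2\circ H^{-1}\circ\Lambda^{-1}$ where $H(x,y,\mathbf z)=(f(x)-\varepsilon(x,y,\mathbf z),\,y,\,\mathbf z-\boldsymbol\delta(y,f^{-1}(y),\mathbf 0))$ and $\Lambda^{-1}(w)=\sigma_0w$ is a dilation by a suitable constant. For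 the $k$-th renormalization $F_k(w)=(f_k(x)-\varepsilon_k(w),x,\boldsymbol\delta_k(w))$ with $H_k$, dilation $\Lambda_k^{-1}(w)=\sigma_kw$, set $\psi^{k+1}_v=H_k^{-1}\circ\Lambda_k^{-1}$ and $\psi^{k+1}_c=F_k\circ\psi^{k+1}_v$. Notation: $X_k=(\partial_x\delta^1_k,\dots,\partial_x\delta^m_k)^T$, $Y_k=(\partial_y\delta^1_k,\dots,\partial_y\delta^m_k)^T$, $Z_k$ the $m\times m$ matrix with $(j,i)$ entry $\partial_{z_i}\delta^j_k$ (and $X=X_0$, $Y=Y_0$, $Z=Z_0$); $\mathbf q_k(y)=\frac{d}{dy}\boldsymbol\delta_k(y,f_k^{-1}(y),\mathbf 0)$ (column vector). $\mathcal N$ is the set of renormalizable $(m+2)$-dimensional Hénon-like maps $F$ with $Y\circ F(w)+Z\circ F(w)\cdot X(w)=\mathbf 0$ for all $w\in\psi^1_c(B)\cup\psi^1_v(B)$. *)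

(* Defs.v *)
From Stdlib Require Import Reals ClassicalEpsilon.
From mathcomp Require Import ssreflect ssrfun ssrbool eqtype ssrnat seq choice fintype bigop finfun.
From mathcomp Require Import fingroup perm.

Set Implicit Arguments.
Unset Strict Implicit.

Open Scope R_scope.

(* A point w = (x, y, z) of R^(m+2), z = (z_1,...,z_m) indexed by 'I_m. *)
Definition Pt (m : nat) : Type := (R * R * ('I_m -> R))%type.

Definition px {m} (w : Pt m) : R := fst (fst w).
Definition py {m} (w : Pt m) : R := snd (fst w).
Definition pz {m} (w : Pt m) : 'I_m -> R := snd w.

Definition zero_z (m : nat) : 'I_m -> R := fun _ => 0.

(* coordinate number a: 0 -> x, 1 -> y, i+2 -> z_i *)
Definition coord {m} (w : Pt m) (a : nat) : R :=
  match a with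
  | 0%nat => px w
  | 1%nat => py w
  | S (S i) => oapp (pz w) 0 (insub i : option 'I_m)
  end.

Definition upd {m} (w : Pt m) (a : nat) (t : R) : Pt m :=
  match a with
  | 0%nat => (t, py w, pz w)
  | 1%nat => (px w, t, pz w)
  | S (S i) => (px w, py w, fun j : 'I_m => if nat_of_ord j == i then t else pz w j)
  end.

(* partial derivative with respect to coordinate number a (chosen by epsilon;
   meaningful when the partial derivative exists) *)
Definition pd {m} (a : nat) (g : Pt m -> R) (w : Pt m) : R :=
  epsilon (inhabits 0)
    (fun l => derivable_pt_lim (fun t => g (upd w a t)) (coord w a) l).

Definition deriv1 (g : R -> R) (t : R) : R :=
  epsilon (inhabits 0) (fun l => derivable_pt_lim g t l).

Definition sumI {m} (F : 'I_m -> R) : R := \big[Rplus/0]_(i < m) F i.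

Definition addP {m} (w h : Pt m) : Pt m :=
  (px w + px h, py w + py h, fun i => pz w i + pz h i).
Definition scaleP {m} (s : R) (w : Pt m) : Pt m :=
  (s * px w, s * py w, fun i => s * pz w i).
Definition nrm {m} (w : Pt m) : R :=
  Rabs (px w) + Rabs (py w) + sumI (fun i => Rabs (pz w i)).

Definition fdiff {m} (g : Pt m -> R) (w : Pt m) : Prop :=
  exists (a b : R) (c : 'I_m -> R), forall eps, 0 < eps ->
    exists del, 0 < del /\ forall h : Pt m, nrm h < del ->
      Rabs (g (addP w h) - g w - (a * px h + b * py h + sumI (fun i => c i * pz h i)))
        <= eps * nrm h.

Definition inB {m} (cen : Pt m) (r : R) (w : Pt m) : Prop :=
  Rabs (px w - px cen) < r /\ Rabs (py w - py cen) < r /\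
  forall i, Rabs (pz w i - pz cen i) < r.

(* Data of an (m+2)-dim Henon-like map F(x,y,z) = (f(x) - eps(x,y,z), x, delta(x,y,z)) *)
Record HData (m : nat) := { hf : R -> R; heps : Pt m -> R; hdel : 'I_m -> Pt m -> R }.

Definition Hmap {m} (D : HData m) (w : Pt m) : Pt m :=
  (hf D (px w) - heps D w, px w, fun j => hdel D j w).

Definition detJ {m} (D : HData m) (w : Pt m) : R :=
  \big[Rplus/0]_(s : 'S_(m.+2))
     ((if odd_perm s then -1 else 1) *
      \big[Rmult/1]_(a < m.+2) pd (s a) (fun u => coord (Hmap D u) a) w).

Definition unimodal (f : R -> R) (lo hi : R) : Prop :=
  exists c, lo < c < hi /\
    (forall s t, lo < s -> s < t -> t <= c -> f s < f t) /\
    (forall s t, c <= s -> s < t -> t < hi -> f t < f s).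

Definition HenonLike {m} (cen : Pt m) (r C eb : R) (D : HData m) : Prop :=
  (forall x, Rabs (x - px cen) < r -> exists l, derivable_pt_lim (hf D) x l) /\
  unimodal (hf D) (px cen - r) (px cen + r) /\
  (forall w, inB cen r w -> fdiff (heps D) w /\ forall j, fdiff (hdel D j) w) /\
  (forall w, inB cen r w -> Rabs (heps D w) <= C * eb /\ forall j, Rabs (hdel D j w) <= C * eb) /\
  (forall w, inB cen r w -> 0 < detJ D w).

Definition Hcoord {m} (D : HData m) (finv : R -> R) (w : Pt m) : Pt m :=
  (hf D (px w) - heps D w, py w,
   fun j => pz w j - hdel D j (py w, finv (py w), (@zero_z m))).

Definition Xf {m} (D : HData m) (j : 'I_m) (w : Pt m) : R := pd 0 (hdel D j) w.
Definition Yf {m} (D : HData m) (j : 'I_m) (w : Pt m) : R := pd 1 (hdel D j) w.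
Definition Zf {m} (D : HData m) (j i : 'I_m) (w : Pt m) : R := pd (nat_of_ord i).+2 (hdel D j) w.

Definition qv {m} (D : HData m) (finv : R -> R) (j : 'I_m) (y : R) : R :=
  deriv1 (fun t => hdel D j (t, finv t, (@zero_z m))) y.

(* One renormalization step: D' = R D, i.e. on B,
   F' = Lambda o H o F^2 o H^{-1} o Lambda^{-1}, Lambda^{-1} w = sigma w,
   where H is a C^1-diffeomorphism on a domain V (subset of B) with inverse branch
   psiv = H^{-1} o Lambda^{-1} : B -> V, and finv is the inverse branch of f used in H. *)
Definition renorm_step {m} (cen : Pt m) (r : R) (D D' : HData m) (sigma : R)
  (finv : R -> R) (V : Pt m -> Prop) (psiv : Pt m -> Pt m) : Prop :=
  sigma <> 0 /\
  (forall u, V u -> inB cen r u) /\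
  (forall u u', V u -> V u' -> Hcoord D finv u = Hcoord D finv u' -> u = u') /\
  (forall w, inB cen r w ->
     V (psiv w) /\
     Hcoord D finv (psiv w) = scaleP sigma w /\
     inB cen r (Hmap D (psiv w)) /\
     V (Hmap D (Hmap D (psiv w))) /\
     scaleP sigma (Hmap D' w) = Hcoord D finv (Hmap D (Hmap D (psiv w))) /\
     (forall a, (a < m.+2)%N -> fdiff (fun u => coord (psiv u) a) w) /\
     inB cen r (sigma * px w, finv (sigma * px w), (@zero_z m)) /\
     inB cen r (sigma * py w, finv (sigma * py w), (@zero_z m)) /\
     (exists l, derivable_pt_lim finv (sigma * px w) l) /\
     (exists l, derivable_pt_lim finv (sigma * py w) l) /\
     hf D (finv (sigma * px w)) = sigma * px w /\
     hf D (finv (sigma * py w)) = sigma * py w).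

(* the condition defining the class N:
   Y o F(w) + Z o F(w) . X(w) = 0 on psi_c(B) u psi_v(B) *)
Definition Ncond {m} (cen : Pt m) (r : R) (D : HData m) (psiv : Pt m -> Pt m) : Prop :=
  forall w, inB cen r w -> forall u, (u = Hmap D (psiv w) \/ u = psiv w) ->
    forall j : 'I_m,
      Yf D j (Hmap D u) + sumI (fun i => Zf D j i (Hmap D u) * Xf D i u) = 0.

(* Main.v *)
Require Import Defs.
From Stdlib Require Import Reals Lra ClassicalEpsilon FunctionalExtensionality.
From HB Require Import structures.
From mathcomp Require Import ssreflect ssrfun ssrbool eqtype ssrnat seq choice fintype bigop finfun.
Open Scope R_scope.
Set Implicit Arguments.
Unset Strict Implicit.

HB.instance Definition _ := Monoid.isComLaw.Build R 0 Rplus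
  (fun x y z => esym (Rplus_assoc x y z)) Rplus_comm Rplus_0_l.

Section S.
Variable m : nat.
Implicit Types F G : 'I_m -> R.

Lemma sumI_add F G : sumI (fun i => F i + G i) = sumI F + sumI G.
Proof. by rewrite /sumI big_split. Qed.

Lemma sumI_scal c F : sumI (fun i => c * F i) = c * sumI F.
Proof.
rewrite /sumI; apply: (big_rec2 (fun x y => x = c * y)); first by ring.
by move=> i x y _ ->; ring.
Qed.

Lemma sumI_ext F G : (forall i, F i = G i) -> sumI F = sumI G.
Proof. by move=> H; rewrite /sumI; apply: eq_bigr => i _. Qed.

Lemma sumI_le F G : (forall i, F i <= G i) -> sumI F <= sumI G.
Proof.
move=> H; rewrite /sumI; apply: (big_rec2 (fun x y => x <= y)); first lra.
move=> i x y _ Hxy; have := H i; lra.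
Qed.

Lemma sumI_abs F : Rabs (sumI F) <= sumI (fun i => Rabs (F i)).
Proof.
rewrite /sumI; apply: (big_rec2 (fun x y => Rabs x <= y)); first by rewrite Rabs_R0; lra.
move=> i x y _ Hxy; have := Rabs_triang (F i) x; lra.
Qed.

Lemma sumI_0 : sumI (fun _ : 'I_m => 0) = 0.
Proof. by rewrite /sumI big1. Qed.

Lemma sumI_delta F (i : 'I_m) :
  sumI (fun l => F l * (if nat_of_ord l == nat_of_ord i then 1 else 0)) = F i.
Proof.
rewrite /sumI (bigD1 i) //= eqxx big1 ?Rmult_1_r ?Rplus_0_r //.
move=> l Hl; have -> : (nat_of_ord l == nat_of_ord i) = false.
  by apply/negbTE; move: Hl; apply: contra => /eqP H; apply/eqP/val_inj.
ring.
Qed.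

Lemma sumI_swap (H : 'I_m -> 'I_m -> R) :
  sumI (fun i => sumI (fun l => H i l)) = sumI (fun l => sumI (fun i => H i l)).
Proof. by rewrite /sumI exchange_big. Qed.
End S.

Lemma fin_delta (P : nat -> R -> Prop) m :
  (forall i d d', P i d -> 0 < d' <= d -> P i d') ->
  (forall i, (i < m)%N -> exists d, 0 < d /\ P i d) ->
  exists d, 0 < d /\ forall i, (i < m)%N -> P i d.
Proof.
move=> Hmono; elim: m => [|m IH] H.
  by exists 1; split; [lra|].
case: IH => [i Hi|d [Hd Hall]]; first by apply: H; apply: ltnW.
case: (H m (ltnSn m)) => d' [Hd' Pd'].
exists (Rmin d d'); split; first by apply: Rmin_pos.
move=> i; rewrite ltnS leq_eqVlt => /orP [/eqP ->|Hi].
  apply: Hmono Pd' _; split; [by apply: Rmin_pos| apply: Rmin_r].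
apply: Hmono (Hall i Hi) _; split; [by apply: Rmin_pos| apply: Rmin_l].
Qed.

Definition FD {m} (g : Pt m -> R) (p : Pt m) a b (c : 'I_m -> R) :=
  forall eps, 0 < eps -> exists del, 0 < del /\ forall h : Pt m, nrm h < del ->
    Rabs (g (addP p h) - g p - (a * px h + b * py h + sumI (fun i => c i * pz h i)))
      <= eps * nrm h.

Lemma sumI_ge0 m (F : 'I_m -> R) : (forall i, 0 <= F i) -> 0 <= sumI F.
Proof. move=> H; rewrite -(sumI_0 m); exact: sumI_le. Qed.

Lemma chain_core m (g : Pt m -> R) (γ : R -> Pt m) a b c t0 dx dy dz :
  FD g (γ t0) a b c ->
  derivable_pt_lim (fun t => px (γ t)) t0 dx ->
  derivable_pt_lim (fun t => py (γ t)) t0 dy ->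
  (forall i, derivable_pt_lim (fun t => pz (γ t) i) t0 (dz i)) ->
  derivable_pt_lim (fun t => g (γ t)) t0 (a * dx + b * dy + sumI (fun i => c i * dz i)).
Proof.
move=> HF Hx Hy Hz eps Heps.
set K := (Rabs dx + 1) + (Rabs dy + 1) + sumI (fun i => Rabs (dz i) + 1).
have HK : 2 <= K.
  have : 0 <= sumI (fun i => Rabs (dz i) + 1).
    by apply: sumI_ge0 => i; have := Rabs_pos (dz i); lra.
  have := Rabs_pos dx; have := Rabs_pos dy; rewrite /K; lra.
set M := Rabs a + Rabs b + sumI (fun i => Rabs (c i)) + 1.
have HM : 1 <= M.
  have : 0 <= sumI (fun i => Rabs (c i)) by apply: sumI_ge0 => i; apply: Rabs_pos.
  have := Rabs_pos a; have := Rabs_pos b; rewrite /M; lra.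
have Heps1 : 0 < eps / (2 * K) by apply: Rdiv_lt_0_compat; lra.
case: (HF _ Heps1) => del1 [Hdel1 Hd1].
set eta := Rmin 1 (eps / (2 * M)).
have Heta : 0 < eta by apply: Rmin_pos; [lra| apply: Rdiv_lt_0_compat; lra].
have Heta1 : eta <= 1 by apply: Rmin_l.
have Heta2 : eta <= eps / (2 * M) by apply: Rmin_r.
case: (Hx _ Heta) => dX HdX.
case: (Hy _ Heta) => dY HdY.
have [dZ [HdZ HdZs]] : exists d, 0 < d /\ forall i, (i < m)%N ->
   forall i' : 'I_m, nat_of_ord i' = i -> forall h, h <> 0 -> Rabs h < d ->
     Rabs ((pz (γ (t0 + h)) i' - pz (γ t0) i') / h - dz i') < eta.
  apply: fin_delta.
    move=> i d d' H [H1 H2] i' Hi h Hh Hhd; apply: H => //; lra.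
  move=> i Hi; case: (Hz (Ordinal Hi) _ Heta) => d Hd.
  exists d; split; first by apply: cond_pos.
  move=> i' Hi'; have -> : i' = Ordinal Hi by apply: val_inj.
  exact: Hd.
have Hpos : 0 < Rmin (Rmin dX dY) (Rmin dZ (del1 / K)).
  apply: Rmin_pos; apply: Rmin_pos; try apply: cond_pos; try lra.
  apply: Rdiv_lt_0_compat; lra.
exists (mkposreal _ Hpos) => h Hh /= Hhd.
have HhX : Rabs h < dX.
  have := Rmin_l (Rmin dX dY) (Rmin dZ (del1 / K)); have := Rmin_l dX dY; lra.
have HhY : Rabs h < dY.
  have := Rmin_l (Rmin dX dY) (Rmin dZ (del1 / K)); have := Rmin_r dX dY; lra.
have HhZ : Rabs h < dZ.
  have := Rmin_r (Rmin dX dY) (Rmin dZ (del1 / K)); have := Rmin_l dZ (del1 / K); lra.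
have HhK : Rabs h < del1 / K.
  have := Rmin_r (Rmin dX dY) (Rmin dZ (del1 / K)); have := Rmin_r dZ (del1 / K); lra.
set p := γ t0.
set q := γ (t0 + h).
set Δ : Pt m := (px q - px p, py q - py p, fun i => pz q i - pz p i).
have HqΔ : addP p Δ = q.
  rewrite /Δ; clear; case: q => [[qx qy] qz]; rewrite /addP /px /py /pz /=.
  congr (_, _, _); try ring.
  by apply: functional_extensionality => i; ring.
set qx := (px q - px p) / h - dx.
set qy := (py q - py p) / h - dy.
set qz := fun i => (pz q i - pz p i) / h - dz i.
have Hqx : Rabs qx < eta by apply: HdX.
have Hqy : Rabs qy < eta by apply: HdY.
have Hqz : forall i, Rabs (qz i) < eta by move=> i; apply: (HdZs i (ltn_ord i)).
have Hbnd : forall d e, Rabs ((e) / h - d) < eta -> Rabs e <= Rabs h * (Rabs d + 1).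
  move=> d e He.
  have -> : e = h * (e / h) by field.
  rewrite Rabs_mult; apply: Rmult_le_compat_l; first exact: Rabs_pos.
  have := Rabs_triang_inv (e / h) d; lra.
have HnΔ : nrm Δ <= Rabs h * K.
  rewrite /nrm /K /Δ /px /py /pz /=.
  rewrite 2!Rmult_plus_distr_l -sumI_scal.
  have := Hbnd _ _ Hqx; have := Hbnd _ _ Hqy.
  have : sumI (fun i => Rabs (pz q i - pz p i)) <= sumI (fun i => Rabs h * (Rabs (dz i) + 1)).
    by apply: sumI_le => i; apply: Hbnd; apply: Hqz.
  rewrite /px /py /pz; lra.
have Hah : 0 < Rabs h by apply: Rabs_pos_lt.
have HnΔd : nrm Δ < del1.
  apply: (Rle_lt_trans _ _ _ HnΔ).
  have -> : del1 = (del1 / K) * K by field; lra.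
  apply: Rmult_lt_compat_r; lra.
have HE := Hd1 _ HnΔd.
rewrite HqΔ in HE.
set E := g q - g p - (a * px Δ + b * py Δ + sumI (fun i => c i * pz Δ i)) in HE.
have Hid : (g q - g p) / h - (a * dx + b * dy + sumI (fun i => c i * dz i)) =
    E / h + (a * qx + b * qy + sumI (fun i => c i * qz i)).
  have -> : sumI (fun i => c i * qz i) =
      / h * sumI (fun i => c i * pz Δ i) + (-1) * sumI (fun i => c i * dz i).
    rewrite -!sumI_scal -sumI_add; apply: sumI_ext => i.
    rewrite /qz /Δ /pz /=; field; exact: Hh.
  rewrite /E /qx /qy /Δ /px /py /=; field; exact: Hh.
rewrite Hid.
apply: (Rle_lt_trans _ _ _ (Rabs_triang _ _)).
have H1 : Rabs (E / h) <= eps / 2.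
  rewrite /Rdiv Rabs_mult Rabs_inv.
  apply: (Rle_trans _ (eps / (2 * K) * (Rabs h * K) * / Rabs h)).
    apply: Rmult_le_compat_r; first by left; apply: Rinv_0_lt_compat.
    apply: (Rle_trans _ _ _ HE); apply: Rmult_le_compat_l; lra.
  right; field; split; lra.
have H2 : Rabs (a * qx + b * qy + sumI (fun i => c i * qz i)) <= (M - 1) * eta.
  apply: (Rle_trans _ _ _ (Rabs_triang _ _)).
  have Hs : Rabs (sumI (fun i => c i * qz i)) <= sumI (fun i => Rabs (c i)) * eta.
    apply: (Rle_trans _ _ _ (sumI_abs _)).
    rewrite Rmult_comm -sumI_scal; apply: sumI_le => i.
    rewrite Rabs_mult Rmult_comm; apply: Rmult_le_compat_r; first exact: Rabs_pos.
    by left; apply: Hqz.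
  have := Rabs_triang (a * qx) (b * qy).
  rewrite !Rabs_mult.
  have := Rmult_le_compat_l (Rabs a) _ _ (Rabs_pos a) (Rlt_le _ _ Hqx).
  have := Rmult_le_compat_l (Rabs b) _ _ (Rabs_pos b) (Rlt_le _ _ Hqy).
  rewrite /M; lra.
have H3 : (M - 1) * eta < eps / 2.
  apply: (Rlt_le_trans _ (M * eta)); first lra.
  apply: (Rle_trans _ (M * (eps / (2 * M)))); first by apply: Rmult_le_compat_l; lra.
  right; field; lra.
lra.
Qed.

Lemma coord_z m (p : Pt m) (i : 'I_m) : coord p (nat_of_ord i).+2 = pz p i.
Proof. by rewrite /coord valK. Qed.

Lemma dconst c x : derivable_pt_lim (fun _ => c) x 0.
Proof. exact: derivable_pt_lim_const. Qed.

Lemma did x : derivable_pt_lim (fun t => t) x 1.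
Proof. exact: derivable_pt_lim_id. Qed.

Lemma upd_curve m (p : Pt m) k : (k < m.+2)%N ->
  upd p k (coord p k) = p /\
  derivable_pt_lim (fun t => px (upd p k t)) (coord p k) (if k == 0%N then 1 else 0) /\
  derivable_pt_lim (fun t => py (upd p k t)) (coord p k) (if k == 1%N then 1 else 0) /\
  forall l : 'I_m, derivable_pt_lim (fun t => pz (upd p k t) l) (coord p k)
                    (if k == (nat_of_ord l).+2 then 1 else 0).
Proof.
case: k => [|[|k]] Hk /=.
- split; first by case: p => [[? ?] ?].
  by split; [apply: did| split; [apply: dconst| move=> l; apply: dconst]].
- split; first by case: p => [[? ?] ?].
  by split; [apply: dconst| split; [apply: did| move=> l; apply: dconst]].
- have Hk' : (k < m)%N by [].
  have -> : oapp (pz p) 0 (insub k) = pz p (Ordinal Hk') by rewrite (insubT (fun x => (x < m)%N) Hk').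
  split.
    case: p => [[x y] z]; rewrite /px /py /pz /=; congr (_, _, _).
    apply: functional_extensionality => l.
    case: eqP => // Hl; congr z; exact: val_inj.
  split; first by apply: dconst.
  split; first by apply: dconst.
  move=> l; rewrite /pz /=.
  have Hb : forall (b : bool) c x, derivable_pt_lim (fun t => if b then t else c) x (if b then 1 else 0).
    by case=> c x; [apply: did| apply: dconst].
  rewrite [X in derivable_pt_lim _ _ X](_ : _ = if nat_of_ord l == k then 1 else 0).
    exact: Hb.
  by case: (nat_of_ord l =P k) => [E|E]; [rewrite E !eqxx | rewrite !ifN_eq //; apply/eqP => H; apply: E; case: H].
Qed.

Lemma pd_eq m k (G : Pt m -> R) w l :
  derivable_pt_lim (fun t => G (upd w k t)) (coord w k) l -> pd k G w = l.
Proof.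
move=> H; rewrite /pd.
have := epsilon_spec (inhabits 0)
  (fun l => derivable_pt_lim (fun t => G (upd w k t)) (coord w k) l) (ex_intro _ l H).
move=> H'; exact: uniqueness_limite H' H.
Qed.

Lemma FD_pd m (g : Pt m -> R) p a b c : FD g p a b c ->
  pd 0 g p = a /\ pd 1 g p = b /\ forall i : 'I_m, pd (nat_of_ord i).+2 g p = c i.
Proof.
move=> HF.
have gen : forall k, (k < m.+2)%N ->
   pd k g p = a * (if k == 0%N then 1 else 0) + b * (if k == 1%N then 1 else 0) +
       sumI (fun l => c l * (if k == (nat_of_ord l).+2 then 1 else 0)).
  move=> k Hk; apply: pd_eq.
  case: (upd_curve p Hk) => E [Hx [Hy Hz]].
  apply: chain_core => //; by rewrite E.
split; first by rewrite gen //= (sumI_ext (G := fun _ => 0)) ?sumI_0; [ring| move=> l; ring].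
split; first by rewrite gen //= (sumI_ext (G := fun _ => 0)) ?sumI_0; [ring| move=> l; ring].
move=> i; rewrite gen ?ltnS ?ltnS ?ltn_ord //=.
rewrite (sumI_ext (G := fun l => c l * (if nat_of_ord l == nat_of_ord i then 1 else 0))).
  rewrite sumI_delta; ring.
by move=> l; rewrite eqSS eq_sym.
Qed.

Lemma chain m (g : Pt m -> R) (γ : R -> Pt m) t0 dx dy dz :
  fdiff g (γ t0) ->
  derivable_pt_lim (fun t => px (γ t)) t0 dx ->
  derivable_pt_lim (fun t => py (γ t)) t0 dy ->
  (forall i, derivable_pt_lim (fun t => pz (γ t) i) t0 (dz i)) ->
  derivable_pt_lim (fun t => g (γ t)) t0
    (pd 0 g (γ t0) * dx + pd 1 g (γ t0) * dy +
     sumI (fun i => pd (nat_of_ord i).+2 g (γ t0) * dz i)).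
Proof.
move=> [a [b [c HF]]] Hx Hy Hz.
case: (FD_pd HF) => -> [-> Hc].
rewrite (sumI_ext (G := fun i => c i * dz i)); last by move=> i; rewrite Hc.
exact: chain_core.
Qed.

Lemma local_lim f g x l d : 0 < d -> derivable_pt_lim f x l ->
  (forall t, Rabs (t - x) < d -> f t = g t) -> derivable_pt_lim g x l.
Proof.
move=> Hd Hf Heq eps Heps.
case: (Hf _ Heps) => del Hdel.
have Hp : 0 < Rmin del d by apply: Rmin_pos; [apply: cond_pos| lra].
exists (mkposreal _ Hp) => h Hh /= Hhd.
have H1 := Rmin_l del d; have H2 := Rmin_r del d.
rewrite -(Heq (x + h)); last by (have -> : x + h - x = h by ring); lra.
rewrite -(Heq x); last by rewrite Rminus_eq_0 Rabs_R0.
apply: Hdel => //; lra.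
Qed.

Lemma inB_open m (cen w : Pt m) r k : (k < m.+2)%N -> inB cen r w ->
  exists d, 0 < d /\ forall t, Rabs (t - coord w k) < d -> inB cen r (upd w k t).
Proof.
move=> Hk [Hx [Hy Hz]].
case: k Hk => [|[|k]] Hk /=.
- exists (r - Rabs (px w - px cen)); split; first lra.
  move=> t Ht; split; [| split => //]; rewrite /px /=.
  have := Rabs_triang (t - px w) (px w - px cen).
  have -> : t - px w + (px w - px cen) = t - fst (fst cen) by rewrite /px; ring.
  rewrite /px in Ht *; lra.
- exists (r - Rabs (py w - py cen)); split; first lra.
  move=> t Ht; split; [done | split => //]; rewrite /py /=.
  have := Rabs_triang (t - py w) (py w - py cen).
  have -> : t - py w + (py w - py cen) = t - snd (fst cen) by rewrite /py; ring.
  rewrite /py in Ht *; lra.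
- have Hk' : (k < m)%N by [].
  have -> : oapp (pz w) 0 (insub k) = pz w (Ordinal Hk') by rewrite (insubT (fun x => (x < m)%N) Hk').
  exists (r - Rabs (pz w (Ordinal Hk') - pz cen (Ordinal Hk'))); split.
    by have := Hz (Ordinal Hk'); lra.
  move=> t Ht; split; [done | split => //] => l; rewrite /pz /=.
  case: eqP => Hl; last by apply: Hz.
  have El : l = Ordinal Hk' by apply: val_inj.
  have := Rabs_triang (t - pz w (Ordinal Hk')) (pz w (Ordinal Hk') - pz cen (Ordinal Hk')).
  have -> : t - pz w (Ordinal Hk') + (pz w (Ordinal Hk') - pz cen (Ordinal Hk')) =
            t - snd cen l by rewrite El /pz; ring.
  rewrite /pz in Ht *; lra.
Qed.

Lemma local_B m (cen w : Pt m) r k f g l : (k < m.+2)%N -> inB cen r w ->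
  derivable_pt_lim f (coord w k) l ->
  (forall t, inB cen r (upd w k t) -> f t = g t) -> derivable_pt_lim g (coord w k) l.
Proof.
move=> Hk HB Hf Heq; case: (inB_open Hk HB) => d [Hd Hd'].
apply: (local_lim Hd Hf) => t Ht; apply: Heq; exact: Hd'.
Qed.

Lemma dscal f a x l : derivable_pt_lim f x l -> derivable_pt_lim (fun t => a * f t) x (a * l).
Proof. exact: derivable_pt_lim_scal. Qed.
Lemma dplus f1 f2 x l1 l2 : derivable_pt_lim f1 x l1 -> derivable_pt_lim f2 x l2 ->
  derivable_pt_lim (fun t => f1 t + f2 t) x (l1 + l2).
Proof. exact: derivable_pt_lim_plus. Qed.
Lemma dminus f1 f2 x l1 l2 : derivable_pt_lim f1 x l1 -> derivable_pt_lim f2 x l2 ->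
  derivable_pt_lim (fun t => f1 t - f2 t) x (l1 - l2).
Proof. exact: derivable_pt_lim_minus. Qed.
Lemma dcomp f1 f2 x y l1 l2 : derivable_pt_lim f1 x l1 -> f1 x = y ->
  derivable_pt_lim f2 y l2 -> derivable_pt_lim (fun t => f2 (f1 t)) x (l2 * l1).
Proof. move=> H1 E H2; rewrite -E in H2; exact: derivable_pt_lim_comp H1 H2. Qed.

Lemma deriv1_eq f x l : derivable_pt_lim f x l -> deriv1 f x = l.
Proof.
move=> H; rewrite /deriv1.
have := epsilon_spec (inhabits 0) (fun l => derivable_pt_lim f x l) (ex_intro _ l H).
move=> H'; exact: uniqueness_limite H' H.
Qed.

Lemma partial_lim m (G : Pt m -> R) w k : fdiff G w -> (k < m.+2)%N ->
  derivable_pt_lim (fun t => G (upd w k t)) (coord w k) (pd k G w).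
Proof.
move=> HG Hk; case: (upd_curve w Hk) => E [Hx [Hy Hz]].
have HG' : fdiff G (upd w k (coord w k)) by rewrite E.
have H := chain HG' Hx Hy Hz.
by rewrite (pd_eq H).
Qed.

Lemma qv_spec m (cen : Pt m) r C eb (D : HData m) (g : R -> R) (j : 'I_m) (s : R) :
  HenonLike cen r C eb D -> inB cen r (s, g s, @zero_z m) ->
  (exists l, derivable_pt_lim g s l) ->
  derivable_pt_lim (fun t => hdel D j (t, g t, @zero_z m)) s (qv D g j s).
Proof.
move=> [_ [_ [Hd _]]] HB [l Hl].
have Hf : fdiff (hdel D j) ((fun t => (t, g t, @zero_z m)) s) by apply: (proj2 (Hd _ HB)).
have H := @chain m (hdel D j) (fun t => (t, g t, @zero_z m)) s 1 l (fun _ => 0) Hf (did s) Hl (fun i => dconst 0 s).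
by rewrite /qv (deriv1_eq H).
Qed.

Definition ex (k : nat) : R := if k == 0%N then 1 else 0.
Definition ey (k : nat) : R := if k == 1%N then 1 else 0.
Definition ez {m} (k : nat) (l : 'I_m) : R := if k == (nat_of_ord l).+2 then 1 else 0.

Lemma step m (cen : Pt m) r C eb (D D' : HData m) σ g V ψ :
  HenonLike cen r C eb D -> renorm_step cen r D D' σ g V ψ -> Ncond cen r D ψ ->
  forall w, inB cen r w -> forall (j : 'I_m) k, (k < m.+2)%N ->
  derivable_pt_lim (fun t => hdel D' j (upd w k t)) (coord w k)
    (Xf D j (Hmap D (ψ w)) * ex k - qv D g j (σ * px w) * ex k +
     sumI (fun i => Zf D j i (Hmap D (ψ w)) *
        (Yf D i (ψ w) * ey k + sumI (fun l => Zf D i l (ψ w) * (ez k l + qv D g l (σ * py w) * ey k))))).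
Proof.
move=> HH [Hσ [HVB [Hinj Hall]]] HN w Hw j k Hk.
have HHd := proj1 (proj2 (proj2 HH)).
case: (Hall w Hw) => HVw [Hcw [HBFw [_ [_ [Hψd [HBx [HBy [Hgx [Hgy _]]]]]]]]].
case: (upd_curve w Hk) => E [Hux [Huy Huz]].
rewrite -/(ex k) -/(ey k) in Hux Huy.
have Huz' : forall l : 'I_m, derivable_pt_lim (fun t => pz (upd w k t) l) (coord w k) (ez k l).
  by move=> l; apply: Huz.
have Lpy : forall v, inB cen r v -> py (ψ v) = σ * py v.
  by move=> v Hv; case: (Hall v Hv) => _ [Hc _]; have := f_equal py Hc.
have Lpz : forall v, inB cen r v -> forall l,
    pz (ψ v) l = σ * pz v l + hdel D l (σ * py v, g (σ * py v), @zero_z m).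
  move=> v Hv l; case: (Hall v Hv) => _ [Hc _].
  have := f_equal (fun u => pz u l) Hc; rewrite /Hcoord /scaleP /=.
  rewrite -(Lpy v Hv) /py /pz /=; lra.
have Lpx : forall v, inB cen r v -> px (Hmap D (ψ v)) = σ * px v.
  by move=> v Hv; case: (Hall v Hv) => _ [Hc _]; have := f_equal px Hc.
have Ld : forall v, inB cen r v ->
    hdel D' j v = / σ * (hdel D j (Hmap D (ψ v)) -
                         hdel D j (σ * px v, g (σ * px v), @zero_z m)).
  move=> v Hv; case: (Hall v Hv) => _ [_ [_ [_ [Hs _]]]].
  have := f_equal (fun u => pz u j) Hs; rewrite /Hcoord /scaleP /=.
  rewrite /py /pz /= (Lpx v Hv) => H1; rewrite -H1; field; exact: Hσ.
set A' := pd k (fun v => coord (ψ v) 0) w.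
have HA : derivable_pt_lim (fun t => px (ψ (upd w k t))) (coord w k) A'.
  exact: (partial_lim (Hψd 0%N isT) Hk).
have HB : derivable_pt_lim (fun t => py (ψ (upd w k t))) (coord w k) (σ * ey k).
  refine (@local_B m cen w r k (fun t => σ * py (upd w k t)) _ _ Hk Hw _ _); first exact: dscal.
  by move=> t Ht; rewrite Lpy.
have HC : forall l, derivable_pt_lim (fun t => pz (ψ (upd w k t)) l) (coord w k)
    (σ * ez k l + qv D g l (σ * py w) * (σ * ey k)).
  move=> l.
  refine (@local_B m cen w r k (fun t => σ * pz (upd w k t) l +
            hdel D l (σ * py (upd w k t), g (σ * py (upd w k t)), @zero_z m)) _ _ Hk Hw _ _).
    apply: dplus; first exact: dscal.
    refine (@dcomp (fun t => σ * py (upd w k t)) (fun s => hdel D l (s, g s, @zero_z m)) _ (σ * py w) _ _ _ _ _); first exact: dscal.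
      by rewrite E.
    exact: (qv_spec l HH HBy Hgy).
  by move=> t Ht; rewrite Lpz.
have HD : forall i, derivable_pt_lim (fun t => hdel D i (ψ (upd w k t))) (coord w k)
   (Xf D i (ψ w) * A' + Yf D i (ψ w) * (σ * ey k) +
    sumI (fun l => Zf D i l (ψ w) * (σ * ez k l + qv D g l (σ * py w) * (σ * ey k)))).
  move=> i.
  have Hf : fdiff (hdel D i) ((fun t => ψ (upd w k t)) (coord w k)).
    by rewrite /= E; apply: (proj2 (HHd _ (HVB _ HVw))).
  have H := @chain m (hdel D i) (fun t => ψ (upd w k t)) (coord w k) _ _ _ Hf HA HB HC.
  by rewrite /= E in H.
have HE : derivable_pt_lim (fun t => hdel D j (Hmap D (ψ (upd w k t)))) (coord w k)
   (Xf D j (Hmap D (ψ w)) * (σ * ex k) + Yf D j (Hmap D (ψ w)) * A' +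
    sumI (fun i => Zf D j i (Hmap D (ψ w)) *
      (Xf D i (ψ w) * A' + Yf D i (ψ w) * (σ * ey k) +
       sumI (fun l => Zf D i l (ψ w) * (σ * ez k l + qv D g l (σ * py w) * (σ * ey k)))))).
  have Hf : fdiff (hdel D j) ((fun t => Hmap D (ψ (upd w k t))) (coord w k)).
    by rewrite /= E; apply: (proj2 (HHd _ HBFw)).
  have HEx : derivable_pt_lim (fun t => px (Hmap D (ψ (upd w k t)))) (coord w k) (σ * ex k).
    refine (@local_B m cen w r k (fun t => σ * px (upd w k t)) _ _ Hk Hw _ _); first exact: dscal.
    by move=> t Ht; rewrite Lpx.
  have H := @chain m (hdel D j) (fun t => Hmap D (ψ (upd w k t))) (coord w k) _ _ _ Hf HEx HA HD.
  by rewrite /= E in H.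
have HF : derivable_pt_lim (fun t => hdel D j (σ * px (upd w k t), g (σ * px (upd w k t)), @zero_z m))
    (coord w k) (qv D g j (σ * px w) * (σ * ex k)).
  refine (@dcomp (fun t => σ * px (upd w k t)) (fun s => hdel D j (s, g s, @zero_z m)) _ (σ * px w) _ _ _ _ _); first exact: dscal.
    by rewrite E.
  exact: (qv_spec j HH HBx Hgx).
have HG := dscal (/ σ) (dminus HE HF).
have HG' : derivable_pt_lim (fun t => hdel D' j (upd w k t)) (coord w k)
   (/ σ * (Xf D j (Hmap D (ψ w)) * (σ * ex k) + Yf D j (Hmap D (ψ w)) * A' +
    sumI (fun i => Zf D j i (Hmap D (ψ w)) *
      (Xf D i (ψ w) * A' + Yf D i (ψ w) * (σ * ey k) +
       sumI (fun l => Zf D i l (ψ w) * (σ * ez k l + qv D g l (σ * py w) * (σ * ey k))))) -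
     qv D g j (σ * px w) * (σ * ex k))).
  refine (@local_B m cen w r k _ _ _ Hk Hw HG _) => t Ht; by rewrite Ld.
have HNw := HN w Hw (ψ w) (or_intror erefl) j.
set S1 := sumI (fun i => Zf D j i (Hmap D (ψ w)) * Xf D i (ψ w)).
set S2 := sumI (fun i => Zf D j i (Hmap D (ψ w)) *
        (Yf D i (ψ w) * ey k + sumI (fun l => Zf D i l (ψ w) * (ez k l + qv D g l (σ * py w) * ey k)))).
have Hsum : sumI (fun i => Zf D j i (Hmap D (ψ w)) *
      (Xf D i (ψ w) * A' + Yf D i (ψ w) * (σ * ey k) +
       sumI (fun l => Zf D i l (ψ w) * (σ * ez k l + qv D g l (σ * py w) * (σ * ey k)))))
    = A' * S1 + σ * S2.
  rewrite /S1 /S2 -!sumI_scal -sumI_add; apply: sumI_ext => i.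
  rewrite (sumI_ext (G := fun l => σ * (Zf D i l (ψ w) * (ez k l + qv D g l (σ * py w) * ey k)))); last first.
    by move=> l; ring.
  rewrite sumI_scal; ring.
rewrite Hsum in HG'.
have HY : Yf D j (Hmap D (ψ w)) = - S1 by rewrite /S1; lra.
rewrite HY in HG'.
rewrite (_ : Xf D j (Hmap D (ψ w)) * ex k - qv D g j (σ * px w) * ex k + S2 =
   / σ * (Xf D j (Hmap D (ψ w)) * (σ * ex k) + - S1 * A' + (A' * S1 + σ * S2) -
     qv D g j (σ * px w) * (σ * ex k))); first exact: HG'.
field; exact: Hσ.
Qed.

Lemma formulas m (cen : Pt m) r C eb (D D' : HData m) σ g V ψ :
  HenonLike cen r C eb D -> renorm_step cen r D D' σ g V ψ -> Ncond cen r D ψ ->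
  forall w, inB cen r w -> forall j : 'I_m,
    Xf D' j w = Xf D j (Hmap D (ψ w)) - qv D g j (σ * px w) /\
    Yf D' j w =
      sumI (fun i => Zf D j i (Hmap D (ψ w)) *
             (Yf D i (ψ w) +
              sumI (fun l => Zf D i l (ψ w) * qv D g l (σ * py w)))) /\
    (forall i : 'I_m,
      Zf D' j i w = sumI (fun l => Zf D j l (Hmap D (ψ w)) * Zf D l i (ψ w))).
Proof.
move=> HH HR HN w Hw j.
have S := step HH HR HN Hw j.
split.
  rewrite [Xf D' j w]/Xf (pd_eq (S 0%N isT)) /ex /ey /ez /=.
  rewrite (sumI_ext (G := fun _ => 0)) ?sumI_0; first ring.
  move=> i; rewrite (sumI_ext (G := fun _ => 0)) ?sumI_0; first ring.
  by move=> l; ring.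
split.
  rewrite [Yf D' j w]/Yf (pd_eq (S 1%N isT)) /ex /ey /ez /=.
  rewrite Rmult_0_r Rmult_0_r Rminus_0_r Rplus_0_l.
  apply: sumI_ext => i; rewrite Rmult_1_r; congr (_ * (_ + _)).
  by apply: sumI_ext => l; ring.
move=> i.
have Hi : ((nat_of_ord i).+2 < m.+2)%N by rewrite !ltnS ltn_ord.
rewrite [Zf D' j i w]/Zf (pd_eq (S _ Hi)) /ex /ey /ez /=.
rewrite Rmult_0_r Rmult_0_r Rminus_0_r Rplus_0_l.
apply: sumI_ext => l; rewrite Rmult_0_r Rplus_0_l; congr (_ * _).
rewrite -(sumI_delta (fun l' => Zf D l l' (ψ w)) i).
apply: sumI_ext => l'; rewrite Rmult_0_r Rplus_0_r.
congr (_ * (if _ then _ else _)).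
by apply/eqP/eqP => [[->]|->].
Qed.

Lemma alg m (Zf1 Y q X : 'I_m -> R) (Z : 'I_m -> 'I_m -> R) :
  (forall i, Y i + sumI (fun l => Z i l * X l) = 0) ->
  sumI (fun i => Zf1 i * (Y i + sumI (fun l => Z i l * q l))) +
  sumI (fun i => sumI (fun l => Zf1 l * Z l i) * (X i - q i)) = 0.
Proof.
move=> H.
rewrite (sumI_ext (F := fun i => sumI (fun l => Zf1 l * Z l i) * (X i - q i))
                  (G := fun i => sumI (fun l => Zf1 l * Z l i * (X i - q i)))); last first.
  by move=> i; rewrite Rmult_comm -sumI_scal; apply: sumI_ext => l; ring.
rewrite sumI_swap.
rewrite (sumI_ext (F := fun l => sumI (fun i => Zf1 l * Z l i * (X i - q i)))
                  (G := fun l => Zf1 l * sumI (fun i => Z l i * (X i - q i)))); last first.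
  by move=> l; rewrite -sumI_scal; apply: sumI_ext => i; ring.
rewrite -sumI_add -(sumI_0 m); apply: sumI_ext => i.
rewrite -Rmult_plus_distr_l Rplus_assoc -sumI_add.
rewrite (sumI_ext (G := fun l => Z i l * X l)); last by move=> l; ring.
by rewrite H; ring.
Qed.

Lemma Nprop m (cen : Pt m) r C eb (D D' D'' : HData m) σ g V ψ σ' g' V' ψ' :
  HenonLike cen r C eb D -> renorm_step cen r D D' σ g V ψ ->
  renorm_step cen r D' D'' σ' g' V' ψ' -> Ncond cen r D ψ -> Ncond cen r D' ψ'.
Proof.
move=> HH HR HR' HN w Hw u Hu j.
have [HuB HpB] : inB cen r u /\ inB cen r (Hmap D' u).
  case: HR' => _ [HVB' [_ Hall']].
  case: (Hall' w Hw) => HV1 [_ [HB1 [HV2 _]]].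
  by case: Hu => ->; split => //; apply: HVB'.
set p := Hmap D' u.
have Hψp : ψ p = Hmap D (Hmap D (ψ u)).
  case: HR => _ [_ [Hinj Hall]].
  case: (Hall p HpB) => HVp [Hcp _].
  case: (Hall u HuB) => _ [_ [_ [HV2 [Hs _]]]].
  apply: Hinj => //; by rewrite Hcp Hs.
have [_ [EY EZ]] := formulas HH HR HN HpB j.
rewrite EY.
rewrite (sumI_ext (F := fun i => Zf D' j i p * Xf D' i u)
   (G := fun i => sumI (fun l => Zf D j l (Hmap D (ψ p)) * Zf D l i (ψ p)) *
                  (Xf D i (Hmap D (ψ u)) - qv D g i (σ * px u)))); last first.
  move=> i; rewrite EZ; congr (_ * _).
  by have [EX _] := formulas HH HR HN HuB i.
rewrite Hψp.
change (py p) with (px u).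
apply: alg => i.
exact: (HN u HuB (Hmap D (ψ u)) (or_introl erefl) i).
Qed.

Unset Implicit Arguments.
Set Strict Implicit.

Theorem lemma3p1 (m n : nat) (cen : Pt m) (r C eb : R)
  (D : nat -> HData m) (sigma : nat -> R) (finv : nat -> R -> R)
  (V : nat -> Pt m -> Prop) (psiv : nat -> Pt m -> Pt m) :
  0 < r -> 0 < C -> 0 < eb ->
  (forall k, (k <= n)%N -> HenonLike cen r C eb (D k)) ->
  (forall k, (k < n)%N ->
     renorm_step cen r (D k) (D k.+1) (sigma k) (finv k) (V k) (psiv k)) ->
  Ncond cen r (D 0%nat) (psiv 0%nat) ->
  forall k, (k < n)%N -> forall w, inB cen r w -> forall j : 'I_m,
    let psic := Hmap (D k) (psiv k w) in
    let psv := psiv k w in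
    Xf (D k.+1) j w = Xf (D k) j psic - qv (D k) (finv k) j (sigma k * px w) /\
    Yf (D k.+1) j w =
      sumI (fun i => Zf (D k) j i psic *
             (Yf (D k) i psv +
              sumI (fun l => Zf (D k) i l psv * qv (D k) (finv k) l (sigma k * py w)))) /\
    (forall i : 'I_m,
      Zf (D k.+1) j i w = sumI (fun l => Zf (D k) j l psic * Zf (D k) l i psv)).
Proof.
move=> _ _ _ HH HR HN0.
have HN : forall k, (k < n)%N -> Ncond cen r (D k) (psiv k).
  elim=> [//|k IH] Hk.
  have Hk' : (k < n)%N by apply: ltnW.
  apply: (Nprop (HH k (ltnW Hk')) (HR k Hk') (HR k.+1 Hk) (IH Hk')).
move=> k Hk w Hw j psic psv.
exact: (formulas (HH k (ltnW Hk)) (HR k Hk) (HN k Hk) Hw j).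
Qed.
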